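(* Let $(L,\cap,\uplus)$ be a finite lattice with a semi-graphoid relation $(\cdot\bot\cdot\mid\cdot)$. Define $A\supseteq_{\bot}B$ to mean $(B\bot B\mid A)$. Then: (i) the relation $\supseteq_\bot$ satisfies Armstrong's axioms; (ii) the relation $(\cdot\bot\cdot\mid\cdot)$ restricted to the lattice $L_c$ of elements closed under $\supseteq_\bot$ (with meet $\cap$ and join $X\uplus_c Y=cl(X\uplus Y)$, where $cl(X)$ is the largest element $Y$ with $X\supseteq_\bot Y$) is a semi-graphoid relation on $L_c$; (iii) if the semi-graphoid relation is given by a polymatroid function $h$ on $L$, then the restriction of $h$ to $L_c$ is a polymatroid function on $L_c$.
   Context: A relation $(\cdot\bot\cdot\mid\cdot)$ on a lattice with meet $\cap$ and join $\uplus$ is semi-graphoid if for all elements $X,Y,Z,W$: (Existence) $(X\bot Y\mid X)$; (Symmetry) $(X\bot Y\mid W)$ iff $(Y\bot X\mid W)$; (Decomposition) $(X\bot Y\uplus Z\mid W)$ implies $(X\bot Z\mid W)$; (Contraction) $(X\bot Z\mid W)$ and $(X\bot Y\mid Z\uplus W)$ imply $(X\bot Y\uplus Z\mid W)$; (Weak union) $(X\bot Y\uplus Z\mid W)$ implies $(X\bot Y\mid Z\uplus W)$. A relation $\to$ satisfies Armstrong's axioms if: $X\to Y$ and $Y\to Z$ imply $X\to Z$; $X\supseteq Y$ implies $X\to Y$; $X\to Y$ implies $X\uplus Z\to Y\uplus Z$. An element $X$ is closed under $\supseteq_\bot$ if $X\supseteq_\bot Y$ implies $X\supseteq Y$. A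 polymatroid function on a lattice is a function $h:L\to\mathbb{R}$ that is non-negative, increasing ($X\supseteq Y\Rightarrow h(X)\ge h(Y)$) and submodular ($h(X)+h(Y)\ge h(X\uplus Y)+h(X\cap Y)$). The semi-graphoid relation given by $h$ is: $(X\bot Y\mid Z)$ iff $h(X\uplus Z)+h(Y\uplus Z)=h(X\uplus Y\uplus Z)+h(Z)$. *)

(* Defs.v *)
From HB Require Import structures.
From mathcomp Require Import all_boot all_order all_algebra.
Set Implicit Arguments. Unset Strict Implicit. Unset Printing Implicit Defensive.
Import Order.TTheory GRing.Theory Num.Theory.

(* Lattice conventions: meet "cap" = Order.meet, join "uplus" = Order.join,
   and "X \supseteq Y" is the lattice order  Y <= X. *)

Definition semigraphoid (T : Type) (P : T -> Prop) (jn : T -> T -> T)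
  (ci : T -> T -> T -> Prop) : Prop :=
  (forall X Y, P X -> P Y -> ci X Y X) /\
  (forall X Y W, P X -> P Y -> P W -> (ci X Y W <-> ci Y X W)) /\
  (forall X Y Z W, P X -> P Y -> P Z -> P W ->
     ci X (jn Y Z) W -> ci X Z W) /\
  (forall X Y Z W, P X -> P Y -> P Z -> P W ->
     ci X Z W -> ci X Y (jn Z W) -> ci X (jn Y Z) W) /\
  (forall X Y Z W, P X -> P Y -> P Z -> P W ->
     ci X (jn Y Z) W -> ci X Y (jn Z W)).

Definition armstrong (T : Type) (sup : T -> T -> Prop) (jn : T -> T -> T)
  (dep : T -> T -> Prop) : Prop :=
  (forall X Y Z, dep X Y -> dep Y Z -> dep X Z) /\
  (forall X Y, sup X Y -> dep X Y) /\
  (forall X Y Z, dep X Y -> dep (jn X Z) (jn Y Z)).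

Local Open Scope ring_scope.
Definition polymatroid (R : numDomainType) (T : Type) (P : T -> Prop)
  (sup : T -> T -> Prop) (mt jn : T -> T -> T) (h : T -> R) : Prop :=
  (forall X, P X -> 0 <= h X) /\
  (forall X Y, P X -> P Y -> sup X Y -> h Y <= h X) /\
  (forall X Y, P X -> P Y -> h (jn X Y) + h (mt X Y) <= h X + h Y).

Local Close Scope ring_scope.
Section Closure.
Variables (d : Order.disp_t) (L : finTBLatticeType d) (ci : L -> L -> L -> bool).

Definition supb (A B : L) : bool := ci B B A.

Definition closedb (X : L) : Prop := forall Y, supb X Y -> (Y <= X)%O.

Definition cl (X : L) : L := (\join_(Y : L | supb X Y) Y)%O.

Definition joinc (X Y : L) : L := cl (X `|` Y)%O.
End Closure.

(* Main.v *)
Require Import Defs.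
From HB Require Import structures.
From mathcomp Require Import all_boot all_order all_algebra.
Import Order.TTheory GRing.Theory Num.Theory.

Local Open Scope order_scope.
Set Implicit Arguments. Unset Strict Implicit.

Definition SG d (L : finTBLatticeType d) (ci : L -> L -> L -> bool) :=
  semigraphoid (fun _ => True) (fun X Y => (X `|` Y)%O) (fun X Y Z => ci X Y Z).

Lemma sg_ex d (L : finTBLatticeType d) ci (H : @SG d L ci) X Y : ci X Y X.
Proof. by case: H => [h _]; apply: h. Qed.
Lemma sg_sym d (L : finTBLatticeType d) ci (H : @SG d L ci) X Y W : ci X Y W -> ci Y X W.
Proof. by case: H => [_ [h _]] /(h X Y W I I I). Qed.
Lemma sg_dec d (L : finTBLatticeType d) ci (H : @SG d L ci) X Y Z W :
  ci X (Y `|` Z) W -> ci X Z W.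
Proof. by case: H => [_ [_ [h _]]]; apply: h. Qed.
Lemma sg_con d (L : finTBLatticeType d) ci (H : @SG d L ci) X Y Z W :
  ci X Z W -> ci X Y (Z `|` W) -> ci X (Y `|` Z) W.
Proof. by case: H => [_ [_ [_ [h _]]]]; apply: h. Qed.
Lemma sg_wu d (L : finTBLatticeType d) ci (H : @SG d L ci) X Y Z W :
  ci X (Y `|` Z) W -> ci X Y (Z `|` W).
Proof. by case: H => [_ [_ [_ [_ h]]]]; apply: h. Qed.

Lemma sg_le d (L : finTBLatticeType d) ci (H : @SG d L ci) A B W :
  B <= W -> ci A B W.
Proof.
move=> hB; apply: (@sg_dec _ _ _ H _ W).
by rewrite (join_idPl hB); apply: (sg_sym H) => //; apply: (sg_ex H).
Qed.

Lemma sg_addW d (L : finTBLatticeType d) ci (H : @SG d L ci) A B W :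
  ci A B W -> ci A (B `|` W) W.
Proof.
move=> h; apply: (sg_con H) => //; first by apply: (sg_le H).
by rewrite joinxx.
Qed.

Lemma sg_fd d (L : finTBLatticeType d) ci (H : @SG d L ci) Y X V :
  ci Y Y X -> ci Y V X.
Proof.
move=> h; apply: (@sg_dec _ _ _ H _ Y); rewrite joinC; apply: (sg_con H) => //.
by apply: (sg_sym H); apply: (sg_le H); apply: leUl.
Qed.

Lemma sg_trans d (L : finTBLatticeType d) ci (H : @SG d L ci) X Y Z :
  ci Y Y X -> ci Z Z Y -> ci Z Z X.
Proof.
move=> h1 h2; apply: (@sg_dec _ _ _ H _ Y); rewrite joinC; apply: (sg_con H) => //.
  by apply: (sg_sym H) => //; apply: (sg_fd H).
by rewrite joinC; apply: (sg_wu H) => //; apply: (sg_fd H).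
Qed.

Lemma sg_mono d (L : finTBLatticeType d) ci (H : @SG d L ci) A B B' W :
  ci A B W -> ci B' B' B -> ci A B' W.
Proof.
move=> h1 h2; apply: (@sg_dec _ _ _ H _ B); rewrite joinC; apply: (sg_con H) => //.
apply: (sg_sym H) => //; apply: (sg_fd H) => //.
by rewrite [B `|` W]joinC; apply: (sg_wu H) => //; apply: (sg_fd H).
Qed.

Lemma sg_super d (L : finTBLatticeType d) ci (H : @SG d L ci) X Y :
  Y <= X -> ci Y Y X.
Proof. by move=> h; apply: (sg_le H). Qed.

Lemma sg_aug d (L : finTBLatticeType d) ci (H : @SG d L ci) X Y Z :
  ci Y Y X -> ci (Y `|` Z) (Y `|` Z) (X `|` Z).
Proof.
move=> h.
have h1 : ci Y Y (X `|` Z).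
  by rewrite joinC; apply: (sg_wu H) => //; apply: (sg_fd H).
have h2 : ci (Y `|` Z) Y (X `|` Z) by apply: (sg_sym H) => //; apply: (sg_fd H).
have h3 := sg_addW H h2.
apply: (@sg_dec _ _ _ H _ (X `|` Z)).
have -> : (X `|` Z) `|` (Y `|` Z) = Y `|` (X `|` Z).
  by rewrite joinC -joinA (join_idPr (leUr _ _)).
by [].
Qed.

Lemma sg_union d (L : finTBLatticeType d) ci (H : @SG d L ci) X A B :
  ci A A X -> ci B B X -> ci (A `|` B) (A `|` B) X.
Proof.
move=> hA hB.
have h1 := sg_aug H X hA; rewrite joinxx in h1.
have h2 := sg_aug H A hB.
rewrite [X `|` A]joinC in h2.
by rewrite joinC; apply: (sg_trans H h1 h2).
Qed.

Lemma cl_dep d (L : finTBLatticeType d) ci (H : @SG d L ci) X : ci (cl ci X) (cl ci X) X.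
Proof.
rewrite /cl; apply: (big_ind (fun Y => ci Y Y X)).
- by apply: (sg_le H); apply: le0x.
- by move=> a b; apply: (sg_union H).
- by [].
Qed.

Lemma cl_max d (L : finTBLatticeType d) (ci : L -> L -> L -> bool) X Y : ci Y Y X -> Y <= cl ci X.
Proof. move=> h; rewrite /cl; exact: (joins_sup (fun Y : L => Y) h). Qed.

Lemma cl_ge d (L : finTBLatticeType d) ci (H : @SG d L ci) X : X <= cl ci X.
Proof. by apply: cl_max; apply: (sg_le H). Qed.

Lemma cl_closed d (L : finTBLatticeType d) ci (H : @SG d L ci) X : closedb ci (cl ci X).
Proof.
move=> Y hY; apply: cl_max; exact: (sg_trans H (cl_dep H X) hY).
Qed.

Lemma cond_cl1 d (L : finTBLatticeType d) ci (H : @SG d L ci) A B W :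
  ci A B (cl ci W) -> ci A B W.
Proof.
move=> h; apply: (@sg_dec _ _ _ H _ (cl ci W)); rewrite joinC; apply: (sg_con H).
  by apply: (sg_sym H); apply: (sg_fd H); exact: (cl_dep H).
by rewrite (join_idPl (cl_ge H W)).
Qed.

Lemma cond_cl2 d (L : finTBLatticeType d) ci (H : @SG d L ci) A B W :
  ci A B W -> ci A B (cl ci W).
Proof.
move=> h; have h1 := sg_addW H h.
have h2 : ci A (cl ci W `|` B) W.
  apply: (sg_mono H h1); rewrite [B `|` W]joinC; exact: (sg_aug H B (cl_dep H W)).
rewrite joinC in h2; have := sg_wu H h2.
by rewrite (join_idPl (cl_ge H W)).
Qed.

Local Close Scope order_scope.
Unset Implicit Arguments.
Local Open Scope ring_scope.

Theorem theorem2 (d : Order.disp_t) (L : finTBLatticeType d)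
  (ci : L -> L -> L -> bool) :
  semigraphoid (fun _ => True) (fun X Y => (X `|` Y)%O) (fun X Y Z => ci X Y Z) ->
  (* (i) Armstrong's axioms for \supseteq_bot *)
  armstrong (fun X Y => (Y <= X)%O) (fun X Y => (X `|` Y)%O)
            (fun X Y => supb ci X Y) /\
  (* (ii) L_c is a lattice (closed under meet; joinc is its join), and the
     restriction of ci to L_c is a semi-graphoid w.r.t. joinc *)
  ((forall X Y, closedb ci X -> closedb ci Y -> closedb ci (X `&` Y)%O) /\
   (forall X Y, closedb ci X -> closedb ci Y ->
      [/\ closedb ci (joinc ci X Y), (X <= joinc ci X Y)%O,
          (Y <= joinc ci X Y)%O &
          forall Z, closedb ci Z -> (X <= Z)%O -> (Y <= Z)%O ->
                    (joinc ci X Y <= Z)%O]) /\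
   semigraphoid (closedb ci) (joinc ci) (fun X Y Z => ci X Y Z)) /\
  (* (iii) polymatroid case *)
  (forall (R : realFieldType) (h : L -> R),
     polymatroid (fun _ => True) (fun X Y => (Y <= X)%O)
                 (fun X Y => (X `&` Y)%O) (fun X Y => (X `|` Y)%O) h ->
     (forall X Y Z, ci X Y Z <->
        h (X `|` Z)%O + h (Y `|` Z)%O = h (X `|` Y `|` Z)%O + h Z) ->
     polymatroid (closedb ci) (fun X Y => (Y <= X)%O)
                 (fun X Y => (X `&` Y)%O) (joinc ci) h).
Proof.
move=> H; have HS : SG ci := H.
split.
  split; first by move=> X Y Z h1 h2; exact: (sg_trans HS h1 h2).
  split; first by move=> X Y hXY; exact: (sg_le HS).
  by move=> X Y Z hXY; exact: (sg_aug HS).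
split.
  split.
    move=> X Y hX hY V hV; rewrite lexI; apply/andP; split.
      by apply: hX; exact: (sg_trans HS (sg_le HS _ (leIl X Y)) hV).
    by apply: hY; exact: (sg_trans HS (sg_le HS _ (leIr Y X)) hV).
  split.
    move=> X Y hX hY; split.
    - exact: cl_closed.
    - exact: (le_trans (leUl X Y) (cl_ge HS _)).
    - exact: (le_trans (leUr Y X) (cl_ge HS _)).
    - move=> Z hZ hXZ hYZ; apply: hZ; rewrite /supb.
      apply: (sg_trans HS _ (cl_dep HS _)).
      by apply: (sg_le HS); rewrite leUx hXZ hYZ.
  split; first by move=> X Y _ _; exact: (sg_ex HS).
  split; first by move=> X Y W _ _ _; split; apply: (sg_sym HS).
  split.
    move=> X Y Z W _ _ _ _ h; rewrite /joinc in h; apply: (@sg_dec _ _ _ HS _ Y).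
    exact: (sg_mono HS h (sg_le HS _ (cl_ge HS _))).
  split.
    move=> X Y Z W _ _ _ _ h1 h2; rewrite /joinc in h2 *.
    have h3 := cond_cl1 HS h2.
    exact: (sg_mono HS (sg_con HS h1 h3) (cl_dep HS _)).
  move=> X Y Z W _ _ _ _ h; rewrite /joinc in h *.
  apply: (cond_cl2 HS); apply: (sg_wu HS).
  exact: (sg_mono HS h (sg_le HS _ (cl_ge HS _))).
move=> R h [h0 [hmon hsub]] hci.
have e : forall V, h (cl ci V) = h V.
  move=> V; have := (hci (cl ci V) (cl ci V) V).1 (cl_dep HS V).
  by rewrite joinxx (join_idPl (cl_ge HS V)); move/addrI.
split; first by move=> X _; exact: h0.
split; first by move=> X Y _ _; exact: hmon.
by move=> X Y _ _; rewrite /joinc e; exact: hsub.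
Qed.
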